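(* Let $(a_n)_{n\ge 0}$ be the sequence defined by $a_0=5$, $a_1=13$ and $a_{n+1}=6a_n-a_{n-1}$ for $n\ge 1$, and let $(b_n)_{n\ge 0}$ be the sequence defined by $b_0=5$, $b_1=17$ and $b_{n+1}=6b_n-b_{n-1}$ for $n\ge 1$. Then $$\{z : \exists\, x,y\in\mathbb{N}^{+} \text{ with } x^2+y^2=z^2,\ y=x+7,\ z\in\mathbb{N}^{+},\ \gcd(x,y,z)=1\} \;=\; \{a_n : n\ge 1\}\cup\{b_n : n\ge 1\}.$$
   Context: $\mathbb{N}^{+}$ denotes the set of positive integers. A triple $(x,y,z)$ of positive integers with $x^2+y^2=z^2$ and $\gcd(x,y,z)=1$ is a primitive Pythagorean triple; the left-hand set is the set of largest entries $z$ of primitive Pythagorean triples whose two smaller entries differ by $7$. *)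

(* Defs.v *)
From mathcomp Require Import all_boot all_order all_algebra.
Set Implicit Arguments. Unset Strict Implicit. Unset Printing Implicit Defensive.
Import GRing.Theory Num.Theory.
Local Open Scope ring_scope.

Fixpoint lin_rec (c0 c1 : int) (n : nat) : int * int :=
  match n with
  | O => (c0, c1)
  | S m => let p := lin_rec c0 c1 m in (p.2, 6 * p.2 - p.1)
  end.

Definition seq_a (n : nat) : int := (lin_rec 5 13 n).1.
Definition seq_b (n : nat) : int := (lin_rec 5 17 n).1.

(* Main.v *)
Require Import Defs.
From mathcomp Require Import all_boot all_order all_algebra.
Import GRing.Theory Num.Theory.
From mathcomp Require Import zify.

Lemma lin_recS c0 c1 m : lin_rec c0 c1 m.+1 = ((lin_rec c0 c1 m).2, (6 * (lin_rec c0 c1 m).2 - (lin_rec c0 c1 m).1)%R).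
Proof. by []. Qed.

Lemma small_cases (p q : nat) : p <= 7 -> p <= q -> p ^ 2 + q ^ 2 + 196 = 6 * p * q ->
  (p == 5) && ((q == 13) || (q == 17)) \/ q = 7 \/ q = 35.
Proof.
move=> hp hpq hQ.
have hq : q <= 35 by nia.
have : all (fun p => all (fun q => (p ^ 2 + q ^ 2 + 196 != 6 * p * q) ||
   ((p == 5) && ((q == 13) || (q == 17))) || (q == 7) || (q == 35)) (iota 0 36)) (iota 0 8) by [].
move=> /allP H1; have /allP H2 := H1 p (ltac:(rewrite mem_iota; lia)).
have := H2 q (ltac:(rewrite mem_iota; lia)).
rewrite hQ eqxx /=.
case/orP=> [/orP[]|/eqP]; first by left.
  by move/eqP; right; left.
by right; right.
Qed.

Lemma descent (q : nat) : forall p : nat, 0 < p <= q -> p ^ 2 + q ^ 2 + 196 = 6 * p * q ->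
  ~~ (7 %| q) -> exists m, lin_rec 5 13 m = (Posz p, Posz q) \/ lin_rec 5 17 m = (Posz p, Posz q).
Proof.
elim: q {-2}q (leqnn q) => [|N IH] q hqN p /andP[hp0 hpq] hQ h7.
  lia.
case: (leqP p 7) => hp7.
2: have hQ' : p * p + q * q + 196 = 6 * p * q by rewrite -hQ !expnS expn0 !muln1.
  case: (small_cases p q hp7 hpq hQ) => [/andP[/eqP -> /orP[]/eqP ->]|[] hq].
  - by exists 0%N; left.
  - by exists 0%N; right.
  - by rewrite hq in h7.
  - by rewrite hq in h7.
have hpos : q < 6 * p.
  have h1 : q * q < (6 * p) * q by nia.
  by rewrite -(ltn_pmul2r (_ : 0 < q)) //; lia.
have hle : 6 * p - q <= p by nia.
have hlt : p < q by nia.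
have h7p : ~~ (7 %| p).
  apply: contra h7 => /dvdnP[k hk].
  have : 7 %| q ^ 2.
    apply/dvdnP; exists (6 * k * q - 7 * k ^ 2 - 28); rewrite hk in hQ *; nia.
  by rewrite (@Euclid_dvdX q 2 7) // andbT.
have hA : p <= N by lia.
have hB : 0 < 6 * p - q <= p by apply/andP; split; lia.
have hC : (6 * p - q) ^ 2 + p ^ 2 + 196 = 6 * (6 * p - q) * p.
  have e : 6 * p - q + q = 6 * p by lia.
  move: (6 * p - q) e => r e; rewrite -e in hQ'; rewrite !expnS expn0 !muln1; nia.
have [m hm] := IH p hA (6 * p - q) hB hC h7p.
exists m.+1; rewrite !lin_recS.
by case: hm => [->|->]; [left|right]; congr pair; rewrite /=; lia.
Qed.

Definition P (p q : nat) : Prop :=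
  5 <= p < q /\ 13 <= q /\ p * p + q * q + 196 = 6 * p * q /\ p %% 4 = 1 /\ q %% 4 = 1 /\
  (p %% 7 = 3 \/ p %% 7 = 5 \/ p %% 7 = 6) /\ (q %% 7 = 3 \/ q %% 7 = 5 \/ q %% 7 = 6) /\
  p %% 7 <> q %% 7.

Lemma inv (p0 q0 : nat) m : P p0 q0 ->
  exists p q : nat, lin_rec (Posz p0) (Posz q0) m = (Posz p, Posz q) /\ P p q.
Proof.
move=> H0; elim: m => [|m [p [q [e H]]]]; first by exists p0, q0.
exists q, (6 * q - p); rewrite lin_recS e /=; split.
  congr pair; move: H; rewrite /P; lia.
move: H; rewrite /P => -[h1 [h2 [h3 [h4 [h5 [h6 [h7 h8]]]]]]].
have e6 : 6 * q - p + p = 6 * q by lia.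
move: (6 * q - p) e6 => r e6.
split; first lia.
split; first lia.
split; first nia.
lia.
Qed.

Lemma gcd_ok (x q : nat) : ~~ (7 %| q) -> gcdn (gcdn x (x + 7)) q = 1.
Proof.
move=> h7; have H : gcdn 7 q = 1 by apply/eqP; rewrite -/(coprime 7 q) prime_coprime.
have : gcdn (gcdn x (x + 7)) q %| gcdn 7 q.
  rewrite gcdnDl dvdn_gcd; apply/andP; split.
    exact: dvdn_trans (dvdn_gcdl (gcdn x 7) q) (dvdn_gcdr x 7).
  exact: dvdn_gcdr.
by rewrite H dvdn1 => /eqP.
Qed.

Lemma backward (c1 : nat) m : P 5 c1 -> exists x : nat, 0 < x /\
  @eq int (Posz (x * x + (x + 7) * (x + 7))) ((lin_rec 5 (Posz c1) m).2 * (lin_rec 5 (Posz c1) m).2)%R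
  /\ (0 < (lin_rec 5 (Posz c1) m).2)%R /\ exists q : nat, (lin_rec 5 (Posz c1) m).2 = Posz q /\ gcdn (gcdn x (x + 7)) q = 1.
Proof.
move=> H0; have [p [q [e H]]] := inv 5 c1 m H0.
rewrite e /=.
move: H; rewrite /P => -[h1 [h2 [h3 [h4 [h5 [h6 [h7 h8]]]]]]].
have hx : 4 * ((3 * q - p - 14) %/ 4) + p + 14 = 3 * q by lia.
move: ((3 * q - p - 14) %/ 4) hx => x hx.
exists x; split; first lia.
split.
  rewrite -PoszM; congr Posz; nia.
split; first lia.
exists q; split => //; apply: gcd_ok; lia.
Qed.

Lemma forward (x q : nat) : 0 < x -> x * x + (x + 7) * (x + 7) = q * q ->
  gcdn (gcdn x (x + 7)) q = 1 ->
  exists m, lin_rec 5 13 m = (Posz (3 * q - 2 * (2 * x + 7)), Posz q) \/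
            lin_rec 5 17 m = (Posz (3 * q - 2 * (2 * x + 7)), Posz q).
Proof.
move=> hx heq hg.
have hu : (2 * x + 7) * (2 * x + 7) + 49 = 2 * (q * q) by nia.
move: (2 * x + 7) hu => u hu.
have hq : 9 <= q.
  case: (leqP 9 q) => // h; have : q * q <= 8 * 8 by apply: leq_mul; lia.
  lia.
have h2u : 2 * u < 3 * q.
  case: (ltnP (2 * u) (3 * q)) => // h.
  have : (3 * q) * (3 * q) <= (2 * u) * (2 * u) by apply: leq_mul.
  lia.
have hqu : q <= u.
  case: (leqP q u) => // h.
  have : u * u <= q * q by apply: leq_mul; lia.
  lia.
have h7 : ~~ (7 %| q).
  apply/negP => /dvdnP[k hk].
  have h7x : 7 %| x.
    have : 7 %| 2 * (x * x).
      apply/dvdnP; exists (7 * k * k - 2 * x - 7); rewrite hk in heq; nia.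
    rewrite Euclid_dvdM // Euclid_dvdM //= => /orP[] //.
  have H7g : 7 %| gcdn (gcdn x (x + 7)) q.
    by rewrite !dvdn_gcd h7x /= dvdn_addl // hk h7x dvdn_mull.
  by rewrite hg in H7g.
apply: (descent q).
- apply/andP; split; lia.
- have e : 3 * q - 2 * u + 2 * u = 3 * q by lia.
  move: (3 * q - 2 * u) e => r e; rewrite !expnS expn0 !muln1; nia.
- exact: h7.
Qed.

Local Open Scope ring_scope.

Theorem mainTheorem1 :
  forall z : int,
    (exists x y : nat, (0 < x)%N /\ (0 < y)%N /\ (0 < z) /\
        (x ^ 2 + y ^ 2)%:Z = z ^+ 2 /\ y = (x + 7)%N /\
        gcdn (gcdn x y) `|z|%N = 1%N)
    <->
    (exists n : nat, (1 <= n)%N /\ (z = seq_a n \/ z = seq_b n)).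
Proof.
move=> z; split.
  move=> [x [y [hx [hy [hz [heq [hyx hg]]]]]]].
  case: z hz heq hg => [q|q] hz heq hg; last by [].
  rewrite hyx expr2 -PoszM in heq; case: heq => heq.
  rewrite hyx /= in hg.
  have heq' : (x * x + (x + 7) * (x + 7) = q * q)%N by rewrite -heq !expnS expn0 !muln1.
  have [m [e|e]] := forward x q hx heq' hg.
    by exists m.+1; split => //; left; rewrite /seq_a lin_recS e.
  by exists m.+1; split => //; right; rewrite /seq_b lin_recS e.
move=> [[|m] [hn [->|->]]] //.
  have [|x [hx [heq [hz [q [eq hg]]]]]] := backward 13 m _.
    by rewrite /P; lia.
  exists x, (x + 7)%N; rewrite /seq_a lin_recS /=; split; first done. split; first lia. split; first exact: hz.
  split; first by rewrite expr2 -heq !expnS expn0 !muln1.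
  split => //; by rewrite eq.
have [|x [hx [heq [hz [q [eq hg]]]]]] := backward 17 m _.
  by rewrite /P; lia.
exists x, (x + 7)%N; rewrite /seq_b lin_recS /=; split; first done. split; first lia. split; first exact: hz.
split; first by rewrite expr2 -heq !expnS expn0 !muln1.
split => //; by rewrite eq.
Qed.
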